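(* Let $H$ be a $k$-linear semi-Hopf category, let $A$ be a right $H$-comodule category and let $B=A^{{\rm co}H}$. The following are equivalent: (1) ${\rm can}^z_{xy}$ is bijective for all $x,y,z\in X$; (2) for all $x,y\in X$, ${\rm can}^y_{xy}$ is bijective and ${\rm can}^x_{xy}$ has a left inverse; (3) for all $x,y\in X$ there is a $k$-linear map $\gamma_{xy}:H_{xy}\to A_{yx}\otimes_{B_x}A_{xy}$, written $\gamma_{xy}(h)=\sum_i l_i(h)\otimes_{B_x}r_i(h)$, such that for all $h\in H_{xy}$ and $a\in A_{xy}$: $$\sum_i l_i(h)r_i(h)_{[0]}\otimes r_i(h)_{[1]}=1_y\otimes h,\qquad \sum_i a_{[0]}l_i(a_{[1]})\otimes_{B_x}r_i(a_{[1]})=1_x\otimes_{B_x}a.$$ (When these hold, $A$ is called an $H$-Galois category extension of $B$.)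
   Context: Let $k$ be a commutative ring; unadorned $\otimes$ is over $k$. A $k$-linear category $A$ with class of objects $X$ consists of $k$-modules $A_{xy}$, associative compositions $A_{xy}\otimes A_{yz}\to A_{xz}$, $a\otimes b\mapsto ab$, and units $1_x\in A_{xx}$. A $k$-linear semi-Hopf category $H$ (objects $X$) is a $k$-linear category in which each $H_{xy}$ is a $k$-coalgebra with $\Delta_{xy}(h)=h_{(1)}\otimes h_{(2)}$ and counit $\varepsilon_{xy}$, such that $\Delta_{xz}(hh')=h_{(1)}h'_{(1)}\otimes h_{(2)}h'_{(2)}$, $\Delta_{xx}(1_x)=1_x\otimes1_x$, $\varepsilon_{xz}(hh')=\varepsilon_{xy}(h)\varepsilon_{yz}(h')$, $\varepsilon_{xx}(1_x)=1$. A right $H$-comodule category is a $k$-linear category $A$ with objects $X$ such that each $A_{xy}$ is a right $H_{xy}$-comodule, $\rho_{xy}(a)=a_{[0]}\otimes a_{[1]}$, with $\rho_{xz}(ab)=a_{[0]}b_{[0]}\otimes a_{[1]}b_{[1]}$ and $\rho_{xx}(1_x)=1_x\otimes1_x$. Its coinvariants are the $k$-algebras $B_x=A^{{\rm co}H}_x=\{a\in A_{xx}\mid\rho_{xx}(a)=a\otimes1_x\}$; $A_{xy}$ is a $B_x$-$B_y$-bimodule by multiplication. The canonical maps are ${\rm can}^z_{xy}:A_{zx}\otimes_{B_x}A_{xy}\to A_{zy}\otimes H_{xy}$, ${\rm can}^z_{xy}(a\otimes_{B_x}a')=aa'_{[0]}\otimes a'_{[1]}$. *)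

(* Defs.v *)
(* Tensor products are not available in MathComp; elements of
   tensor products are represented by finite sums of pure tensors (sequences of
   pairs/triples), and equality in the tensor product is characterized by the
   universal property (equal images under every multilinear / balanced map). *)
From HB Require Import structures.
From mathcomp Require Import all_boot all_order all_algebra.
Set Implicit Arguments. Unset Strict Implicit. Unset Printing Implicit Defensive.
Import GRing.Theory.
Local Open Scope ring_scope.

Section Defs.
Variable k : comPzRingType.

Definition bilin (U V W : lmodType k) (f : U -> V -> W) : Prop :=
  (forall (c : k) u u' v, f (c *: u + u') v = c *: f u v + f u' v) /\
  (forall (c : k) u v v', f u (c *: v + v') = c *: f u v + f u v').

Definition trilin (U V W Z : lmodType k) (f : U -> V -> W -> Z) : Prop :=
  (forall (c : k) u u' v w, f (c *: u + u') v w = c *: f u v w + f u' v w) /\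
  (forall (c : k) u v v' w, f u (c *: v + v') w = c *: f u v w + f u v' w) /\
  (forall (c : k) u v w w', f u v (c *: w + w') = c *: f u v w + f u v w').

Definition teq (V W : lmodType k) (s t : seq (V * W)) : Prop :=
  forall (U : lmodType k) (f : V -> W -> U), bilin f ->
    \sum_(p <- s) f p.1 p.2 = \sum_(p <- t) f p.1 p.2.

Definition teq3 (V W Z : lmodType k) (s t : seq (V * W * Z)) : Prop :=
  forall (U : lmodType k) (f : V -> W -> Z -> U), trilin f ->
    \sum_(p <- s) f p.1.1 p.1.2 p.2 = \sum_(p <- t) f p.1.1 p.1.2 p.2.

Definition tscale (V W : lmodType k) (c : k) (s : seq (V * W)) : seq (V * W) :=
  [seq (c *: p.1, p.2) | p <- s].

Definition is_coalgebra (C : lmodType k) (D : C -> seq (C * C)) (e : C -> k)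
  : Prop :=
  (forall (c : k) h h', teq (D (c *: h + h')) (tscale c (D h) ++ D h')) /\
  (forall (c : k) h h', e (c *: h + h') = c * e h + e h') /\
  (forall h, teq3 [seq (p.1, q.1, q.2) | p <- D h, q <- D p.2]
                  [seq (q.1, q.2, p.2) | p <- D h, q <- D p.1]) /\
  (forall h, \sum_(p <- D h) e p.1 *: p.2 = h) /\
  (forall h, \sum_(p <- D h) e p.2 *: p.1 = h).

Definition is_comodule (C M : lmodType k) (D : C -> seq (C * C)) (e : C -> k)
  (rho : M -> seq (M * C)) : Prop :=
  (forall (c : k) m m', teq (rho (c *: m + m')) (tscale c (rho m) ++ rho m')) /\
  (forall m, teq3 [seq (p.1, q.1, q.2) | p <- rho m, q <- D p.2]
                  [seq (q.1, q.2, p.2) | p <- rho m, q <- rho p.1]) /\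
  (forall m, \sum_(p <- rho m) e p.2 *: p.1 = m).

Record lincat (X : Type) := LinCat {
  lhom : X -> X -> lmodType k;
  lcomp : forall x y z, lhom x y -> lhom y z -> lhom x z;
  lid : forall x, lhom x x }.

Definition is_lincat (X : Type) (C : lincat X) : Prop :=
  (forall x y z, bilin (@lcomp _ C x y z)) /\
  (forall x y z w (a : lhom C x y) (b : lhom C y z) (c : lhom C z w),
      lcomp (lcomp a b) c = lcomp a (lcomp b c)) /\
  (forall x y (a : lhom C x y), lcomp (lid C x) a = a) /\
  (forall x y (a : lhom C x y), lcomp a (lid C y) = a).

Definition is_semiHopf (X : Type) (H : lincat X)
  (D : forall x y, lhom H x y -> seq (lhom H x y * lhom H x y))
  (e : forall x y, lhom H x y -> k) : Prop :=
  is_lincat H /\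
  (forall x y, is_coalgebra (@D x y) (@e x y)) /\
  (forall x y z (h : lhom H x y) (h' : lhom H y z),
      teq (D x z (lcomp h h'))
          [seq (lcomp p.1 q.1, lcomp p.2 q.2) | p <- D x y h, q <- D y z h']) /\
  (forall x, teq (D x x (lid H x)) [:: (lid H x, lid H x)]) /\
  (forall x y z (h : lhom H x y) (h' : lhom H y z),
      e x z (lcomp h h') = e x y h * e y z h') /\
  (forall x, e x x (lid H x) = 1).

Definition is_comodcat (X : Type) (H : lincat X)
  (D : forall x y, lhom H x y -> seq (lhom H x y * lhom H x y))
  (e : forall x y, lhom H x y -> k) (A : lincat X)
  (rho : forall x y, lhom A x y -> seq (lhom A x y * lhom H x y)) : Prop :=
  is_lincat A /\
  (forall x y, is_comodule (@D x y) (@e x y) (@rho x y)) /\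
  (forall x y z (a : lhom A x y) (b : lhom A y z),
      teq (rho x z (lcomp a b))
          [seq (lcomp p.1 q.1, lcomp p.2 q.2) | p <- rho x y a, q <- rho y z b]) /\
  (forall x, teq (rho x x (lid A x)) [:: (lid A x, lid H x)]).

Section Galois.
Variables (X : Type) (H A : lincat X)
  (rho : forall x y, lhom A x y -> seq (lhom A x y * lhom H x y)).

(* b is in B_x = A_x^{co H} *)
Definition coinv (x : X) (b : lhom A x x) : Prop :=
  teq (@rho x x b) [:: (b, lid H x)].

(* s = t as elements of A_zx ⊗_{B_x} A_xy *)
Definition teqB (z x y : X) (s t : seq (lhom A z x * lhom A x y)) : Prop :=
  forall (U : lmodType k) (f : lhom A z x -> lhom A x y -> U), bilin f ->
    (forall b, coinv b -> forall a a', f (lcomp a b) a' = f a (lcomp b a')) ->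
    \sum_(p <- s) f p.1 p.2 = \sum_(p <- t) f p.1 p.2.

(* canonical map can^z_{xy} : A_zx ⊗_{B_x} A_xy -> A_zy ⊗ H_xy on representatives *)
Definition can (z x y : X) (s : seq (lhom A z x * lhom A x y))
  : seq (lhom A z y * lhom H x y) :=
  [seq (lcomp p.1 q.1, q.2) | p <- s, q <- @rho x y p.2].

Definition can_bijective (z x y : X) : Prop :=
  (forall s s' : seq (lhom A z x * lhom A x y), teq (can s) (can s') -> teqB s s') /\
  (forall u : seq (lhom A z y * lhom H x y), exists s : seq (lhom A z x * lhom A x y),
      teq (can s) u).

Definition can_has_left_inverse (z x y : X) : Prop :=
  exists g : seq (lhom A z y * lhom H x y) -> seq (lhom A z x * lhom A x y),
    (forall u u', teq u u' -> teqB (g u) (g u')) /\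
    (forall (c : k) u u', teqB (g (tscale c u ++ u')) (tscale c (g u) ++ g u')) /\
    (forall s : seq (lhom A z x * lhom A x y), teqB (g (can s)) s).

Definition gamma_cond (x y : X) : Prop :=
  exists gamma : lhom H x y -> seq (lhom A y x * lhom A x y),
    (forall (c : k) h h', teqB (gamma (c *: h + h')) (tscale c (gamma h) ++ gamma h')) /\
    (forall h, teq [seq (lcomp p.1 q.1, q.2) | p <- gamma h, q <- @rho x y p.2]
                   [:: (lid A y, h)]) /\
    (forall a, teqB [seq (lcomp p.1 q.1, q.2) | p <- @rho x y a, q <- gamma p.2]
                    [:: (lid A x, a)]).

End Galois.
End Defs.

(* Main.v *)
Require Import Defs.
From HB Require Import structures.
From mathcomp Require Import all_boot all_order all_algebra.
From Stdlib Require Import ClassicalEpsilon.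
Set Implicit Arguments. Unset Strict Implicit. Unset Printing Implicit Defensive.
Import GRing.Theory.
Local Open Scope ring_scope.

Lemma bilin0l (k : comPzRingType) (U V W : lmodType k) (f : U -> V -> W) :
  bilin f -> forall v, f 0 v = 0.
Proof.
move=> [fl fr] v; have h := fl 1 0 0 v; rewrite !scale1r addr0 in h.
have := congr1 (fun t => t - f 0 v) h; rewrite subrr addrK => <-. by [].
Qed.

Lemma bilin0r (k : comPzRingType) (U V W : lmodType k) (f : U -> V -> W) :
  bilin f -> forall u, f u 0 = 0.
Proof.
move=> [fl fr] u; have h := fr 1 u 0 0; rewrite !scale1r addr0 in h.
have := congr1 (fun t => t - f u 0) h; rewrite subrr addrK => <-. by [].
Qed.

Lemma bilinZl (k : comPzRingType) (U V W : lmodType k) (f : U -> V -> W) :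
  bilin f -> forall c u v, f (c *: u) v = c *: f u v.
Proof.
move=> fb c u v; have := fb.1 c u 0 v; rewrite addr0 (bilin0l fb) addr0; done.
Qed.

Lemma bilinDl (k : comPzRingType) (U V W : lmodType k) (f : U -> V -> W) :
  bilin f -> forall u u' v, f (u + u') v = f u v + f u' v.
Proof. by move=> fb u u' v; have := fb.1 1 u u' v; rewrite !scale1r. Qed.

Lemma bilinZr (k : comPzRingType) (U V W : lmodType k) (f : U -> V -> W) :
  bilin f -> forall c u v, f u (c *: v) = c *: f u v.
Proof.
move=> fb c u v; have := fb.2 c u v 0; rewrite addr0 (bilin0r fb) addr0; done.
Qed.

Lemma bilinDr (k : comPzRingType) (U V W : lmodType k) (f : U -> V -> W) :
  bilin f -> forall u v v', f u (v + v') = f u v + f u v'.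
Proof. by move=> fb u v v'; have := fb.2 1 u v v'; rewrite !scale1r. Qed.

Lemma sum_tscale (k : comPzRingType) (V W U : lmodType k) (f : V -> W -> U)
  c (s : seq (V * W)) : bilin f ->
  \sum_(p <- tscale c s) f p.1 p.2 = c *: \sum_(p <- s) f p.1 p.2.
Proof.
move=> fb; rewrite big_map scaler_sumr; apply: eq_bigr => p _.
by rewrite (bilinZl fb).
Qed.

Lemma precomp_bilin (k : comPzRingType) (X : Type) (A : lincat k X)
  (U V : lmodType k) (w x y : X) (f : lhom A w y -> V -> U) (a : lhom A w x) :
  is_lincat A -> bilin f -> bilin (fun (l : lhom A x y) r => f (lcomp a l) r).
Proof.
move=> [Hb _] fb; split=> c u u' v /=.
  by rewrite ((Hb w x y).2) fb.1.
by rewrite fb.2.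
Qed.

Lemma precomp_bal (k : comPzRingType) (X : Type) (H A : lincat k X)
  (rho : forall x y, lhom A x y -> seq (lhom A x y * lhom H x y))
  (U : lmodType k) (w x y z : X) (f : lhom A w y -> lhom A y z -> U) (a : lhom A w x) :
  is_lincat A ->
  (forall b, coinv rho b -> forall a a', f (lcomp a b) a' = f a (lcomp b a')) ->
  (forall b, coinv rho b -> forall (l : lhom A x y) r,
      f (lcomp a (lcomp l b)) r = f (lcomp a l) (lcomp b r)).
Proof.
by move=> [_ [Ha _]] fbal b cb l r; rewrite -Ha fbal.
Qed.

Lemma sum_can (k : comPzRingType) (X : Type) (H A : lincat k X)
  (rho : forall x y, lhom A x y -> seq (lhom A x y * lhom H x y))
  (U : lmodType k) (z x y : X) (f : lhom A z y -> lhom H x y -> U) s :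
  \sum_(t <- can rho s) f t.1 t.2 =
  \sum_(p <- s) \sum_(q <- rho x y p.2) f (lcomp p.1 q.1) q.2.
Proof. by rewrite /can big_allpairs_dep. Qed.

Lemma sum_can_lin (k : comPzRingType) (X : Type) (H A : lincat k X)
  (rho : forall x y, lhom A x y -> seq (lhom A x y * lhom H x y))
  (U : lmodType k) (z x y : X) (f : lhom A z y -> lhom H x y -> U) c s s' :
  is_lincat A -> bilin f ->
  \sum_(t <- can rho (tscale c s ++ s')) f t.1 t.2 =
  c *: \sum_(t <- can rho s) f t.1 t.2 + \sum_(t <- can rho s') f t.1 t.2.
Proof.
move=> [Hb _] fb; rewrite !sum_can big_cat big_map scaler_sumr; congr (_ + _).
apply: eq_bigr => p _ /=; rewrite scaler_sumr; apply: eq_bigr => q _.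
have := (Hb z x y).1 c p.1 0 q.1.
rewrite addr0 => ->.
have H0 : lcomp (0 : lhom A z x) q.1 = 0.
  have h := (Hb z x y).1 1 0 0 q.1; rewrite !scale1r addr0 in h.
  by have := congr1 (fun t => t - lcomp (0 : lhom A z x) q.1) h; rewrite subrr addrK => <-.
by rewrite H0 addr0 (bilinZl fb).
Qed.
Lemma L31 (k : comPzRingType) (X : Type) (H A : lincat k X)
  (rho : forall x y, lhom A x y -> seq (lhom A x y * lhom H x y)) :
  is_lincat A -> (forall x y, gamma_cond rho x y) ->
  forall x y z, can_bijective rho z x y.
Proof.
move=> HA gam x y z; have [Hb [Ha [Hl Hr]]] := HA.
have [g [glin [gcan ginv]]] := gam x y.
split.
- move=> s s' Hss' U f fb fbal.
  pose G (a : lhom A z y) (h : lhom H x y) := \sum_(q <- g h) f (lcomp a q.1) q.2.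
  have claim : forall s0 : seq (lhom A z x * lhom A x y),
      \sum_(p <- s0) f p.1 p.2 = \sum_(t <- can rho s0) G t.1 t.2.
    move=> s0; rewrite sum_can; apply: eq_bigr => p _.
    have := ginv p.2 U (fun l r => f (lcomp p.1 l) r) (precomp_bilin p.1 HA fb)
       (precomp_bal p.1 HA fbal).
    rewrite big_allpairs_dep big_seq1 /= Hr => <-.
    apply: eq_bigr => q _; rewrite /G; apply: eq_bigr => r _.
    by rewrite Ha.
  rewrite !claim; apply: Hss'; split.
  + move=> c u u' v; rewrite /G scaler_sumr -big_split /=; apply: eq_bigr => q _.
    by rewrite ((Hb z y x).1) fb.1.
  + move=> c u v v'; rewrite /G.
    rewrite (glin c v v' U (fun l r => f (lcomp u l) r) (precomp_bilin u HA fb)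
       (precomp_bal u HA fbal)).
    rewrite big_cat /= big_map scaler_sumr; congr (_ + _); apply: eq_bigr => q _ /=.
    by rewrite (bilinZr (Hb z y x)) (bilinZl fb).
- move=> u; exists [seq (lcomp p.1 q.1, q.2) | p <- u, q <- g p.2].
  move=> U f fb; rewrite sum_can big_allpairs_dep; apply: eq_bigr => p _ /=.
  have := gcan p.2 U (fun l r => f (lcomp p.1 l) r) (precomp_bilin p.1 HA fb).
  rewrite big_allpairs_dep big_seq1 /= Hr => <-.
  apply: eq_bigr => q _; apply: eq_bigr => r _.
  by rewrite Ha.
Qed.
Lemma bij_linv (k : comPzRingType) (X : Type) (H A : lincat k X)
  (rho : forall x y, lhom A x y -> seq (lhom A x y * lhom H x y)) :
  is_lincat A -> forall z x y, can_bijective rho z x y -> can_has_left_inverse rho z x y.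
Proof.
move=> HA z x y [inj sur].
pose g u := proj1_sig (constructive_indefinite_description _ (sur u)).
have gs : forall u, teq (can rho (g u)) u.
  by move=> u; exact: (proj2_sig (constructive_indefinite_description _ (sur u))).
exists g; split; [|split].
- move=> u u' Huu'; apply: inj => U f fb.
  by rewrite (gs u U f fb) (gs u' U f fb) (Huu' U f fb).
- move=> c u u'; apply: inj => U f fb.
  rewrite (gs _ U f fb) (sum_can_lin _ _ _ _ HA fb) (gs u U f fb) (gs u' U f fb).
  by rewrite big_cat sum_tscale.
- move=> s; apply: inj => U f fb; exact: (gs _ U f fb).
Qed.

Lemma L12 (k : comPzRingType) (X : Type) (H A : lincat k X)
  (rho : forall x y, lhom A x y -> seq (lhom A x y * lhom H x y)) :
  is_lincat A -> (forall x y z, can_bijective rho z x y) ->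
  forall x y, can_bijective rho y x y /\ can_has_left_inverse rho x x y.
Proof.
move=> HA hyp x y; split; first exact: hyp.
exact: bij_linv (hyp x y x).
Qed.

Lemma L23 (k : comPzRingType) (X : Type) (H A : lincat k X)
  (rho : forall x y, lhom A x y -> seq (lhom A x y * lhom H x y)) :
  is_lincat A ->
  (forall x y, can_bijective rho y x y /\ can_has_left_inverse rho x x y) ->
  forall x y, gamma_cond rho x y.
Proof.
move=> HA hyp x y; have [Hb [Ha [Hl Hr]]] := HA.
have [[inj sur] [g [gresp [glin gleft]]]] := hyp x y.
pose gam (h : lhom H x y) :=
  proj1_sig (constructive_indefinite_description _ (sur [:: (lid A y, h)])).
have gs : forall h, teq (can rho (gam h)) [:: (lid A y, h)].
  by move=> h; exact: (proj2_sig (constructive_indefinite_description _ (sur _))).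
exists gam; split; [|split].
- move=> c h h'; apply: inj => U f fb.
  rewrite (gs _ U f fb) (sum_can_lin _ _ _ _ HA fb) (gs h U f fb) (gs h' U f fb).
  by rewrite !big_seq1 /= (bilinDr fb) (bilinZr fb).
- exact: gs.
- move=> a.
  set t := [seq _ | p <- _, q <- _].
  have Ht : teq (can rho t) (can rho [:: (lid A x, a)]).
    move=> U f fb; rewrite !sum_can big_seq1 /= big_allpairs_dep.
    apply: eq_bigr => p _ /=; rewrite Hl.
    have := gs p.2 U (fun l r => f (lcomp p.1 l) r) (precomp_bilin p.1 HA fb).
    rewrite /can big_allpairs_dep big_seq1 /= Hr => <-.
    apply: eq_bigr => q _; apply: eq_bigr => r _.
    by rewrite Ha.
  move=> U f fb fbal.
  rewrite -(gleft t U f fb fbal) (gresp _ _ Ht U f fb fbal).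
  exact: (gleft _ U f fb fbal).
Qed.

Theorem theorem3p5 (k : comPzRingType) (X : Type) (H : lincat k X)
  (D : forall x y, lhom H x y -> seq (lhom H x y * lhom H x y))
  (e : forall x y, lhom H x y -> k) (A : lincat k X)
  (rho : forall x y, lhom A x y -> seq (lhom A x y * lhom H x y)) :
  is_semiHopf D e -> is_comodcat D e rho ->
  ((forall x y z : X, can_bijective rho z x y) <->
   (forall x y : X, can_bijective rho y x y /\ can_has_left_inverse rho x x y)) /\
  ((forall x y : X, can_bijective rho y x y /\ can_has_left_inverse rho x x y) <->
   (forall x y : X, gamma_cond rho x y)).
Proof.
move=> _ [HA _].
split; split.
- exact: L12.
- by move=> h; apply: L31 => //; apply: L23.
- exact: L23.
- by move=> h; apply: L12 => //; apply: L31.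
Qed.
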